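(* Let $A$ be an $m\times n$ matrix with $m\ge n$ such that every square submatrix of $A$ is nonsingular. Then $A$ has rank $n$ and $A$ is completely unsparsifiable, i.e. $\operatorname{nnz}(AX)\ge (m-n+1)n$ for every invertible $n\times n$ matrix $X$. Moreover, the $(n+m)\times n$ matrix $\begin{pmatrix} I_n\\ A\end{pmatrix}$ (the $n\times n$ identity stacked above $A$) is optimally sparse.
   Context: $\operatorname{nnz}(M)$ is the number of nonzero entries of $M$. A matrix $M$ with $k$ columns is optimally sparse if $\operatorname{nnz}(MX)\ge\operatorname{nnz}(M)$ for every invertible $k\times k$ matrix $X$. A square submatrix of $A$ is $A(R,C)$ for row set $R$ and column set $C$ with $|R|=|C|\ge 1$. *)

(* Defs.v *)
From HB Require Import structures.
From mathcomp Require Import all_boot all_order all_algebra.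
Set Implicit Arguments. Unset Strict Implicit. Unset Printing Implicit Defensive.
Import GRing.Theory.
Local Open Scope ring_scope.

Definition nnz (F : fieldType) (p k : nat) (M : 'M[F]_(p, k)) : nat :=
  #|[set ij : 'I_p * 'I_k | M ij.1 ij.2 != 0]|.

Definition optimally_sparse (F : fieldType) (p k : nat) (M : 'M[F]_(p, k)) : Prop :=
  forall X : 'M[F]_k, X \in unitmx -> (nnz M <= nnz (M *m X))%N.

(* every square submatrix A(R,C), |R| = |C| = s.+1 >= 1, is nonsingular;
   R and C are given by their increasing enumerations f and g. *)
Definition all_square_submx_nonsingular (F : fieldType) (m n : nat)
    (A : 'M[F]_(m, n)) : Prop :=
  forall (s : nat) (f : 'I_s.+1 -> 'I_m) (g : 'I_s.+1 -> 'I_n),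
    {homo f : x y / (x < y)%N} -> {homo g : x y / (x < y)%N} ->
    \det (mxsub f g A) != 0.

(* Main.v *)
Require Import Defs.
From HB Require Import structures.
From mathcomp Require Import all_boot all_order all_algebra.
Set Implicit Arguments. Unset Strict Implicit. Unset Printing Implicit Defensive.
Import GRing.Theory.
Local Open Scope ring_scope.

Lemma sorted_enum_ord n (S : {pred 'I_n}) : sorted (fun i j : 'I_n => (i < j)%N) (enum S).
Proof.
rewrite /enum_mem -enumT; apply: sorted_filter.
  by move=> a b c; apply: ltn_trans.
have := iota_ltn_sorted 0 n; rewrite -val_enum_ord sorted_map; exact.
Qed.

Lemma nth_enum_homo n (S : {pred 'I_n}) j0 s : #|S| = s.+1 ->
  {homo (fun i : 'I_s.+1 => nth j0 (enum S) i) : a b / (a < b)%N}.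
Proof.
move=> eS a b ab.
have tr : transitive (fun i j : 'I_n => (i < j)%N) by move=> x y z; apply: ltn_trans.
apply: (sorted_ltn_nth tr j0 (sorted_enum_ord S)) => //; rewrite inE -cardE eS ?ltn_ord //.
Qed.

Lemma key (F : fieldType) m n (A : 'M[F]_(m,n)) : all_square_submx_nonsingular A ->
  forall x : 'cV[F]_n, x != 0 ->
  (#|[set i | (A *m x) i ord0 == 0%R]| < #|[set j | x j ord0 != 0%R]|)%N.
Proof.
move=> HA x x0; set R := [set i | _]; set S := [set j | _].
rewrite ltnNge; apply/negP => HSR.
have : (0 < #|S|)%N.
  rewrite card_gt0; apply/set0Pn.
  case: (pickP (fun j => x j ord0 != 0)) => [j Hj|H]; first by exists j; rewrite inE.
  case/negP: x0; apply/eqP/matrixP => i k; rewrite (ord1 k) mxE.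
  by move/negbFE/eqP: (H i).
case eS : #|S| => [|s] // _.
have : (0 < #|R|)%N by rewrite (leq_trans _ HSR) // eS.
case/card_gt0P => i0 _.
have : (0 < #|S|)%N by rewrite eS.
case/card_gt0P => j0 _.
have eR : (s.+1 <= #|R|)%N by rewrite -eS.
set g := fun i : 'I_s.+1 => nth j0 (enum S) i.
set f := fun i : 'I_s.+1 => nth i0 (enum R) i.
have hg : {homo g : a b / (a < b)%N} by apply: nth_enum_homo.
have hf : {homo f : a b / (a < b)%N}.
  move=> a b ab.
  have tr : transitive (fun i j : 'I_m => (i < j)%N) by move=> x1 y z; apply: ltn_trans.
  apply: (sorted_ltn_nth tr i0 (sorted_enum_ord R)) => //; rewrite inE -cardE;
    exact: leq_trans (ltn_ord _) eR.
have gS : forall i, g i \in S.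
  move=> i; rewrite -mem_enum /g mem_nth // -cardE eS ltn_ord //.
have fR : forall i, f i \in R.
  move=> i; rewrite -mem_enum /f mem_nth // -cardE; exact: leq_trans (ltn_ord _) eR.
set B := mxsub f g A.
set y := \col_(i < s.+1) x (g i) ord0.
have By : B *m y = 0.
  apply/matrixP=> i k; rewrite (ord1 k) !mxE.
  have := fR i; rewrite inE => /eqP H0; rewrite -[RHS]H0 mxE.
  rewrite [RHS](bigID (fun j => j \in S)) /= [X in _ + X]big1 ?addr0; last first.
    by move=> j; rewrite inE negbK => /eqP ->; rewrite mulr0.
  have E : \sum_(j <- enum S) A (f i) j * x j ord0 = \sum_(j < s.+1) A (f i) (g j) * x (g j) ord0.
    rewrite (big_nth j0) -cardE eS big_mkord //.
  rewrite big_enum in E; rewrite E.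
  by apply: eq_bigr => j _; rewrite !mxE.
have Hu : B \in unitmx by rewrite unitmxE unitfE HA.
have : y = invmx B *m (B *m y) by rewrite mulKmx.
rewrite By mulmx0 => y0.
have := congr1 (fun M : 'cV_s.+1 => M ord0 ord0) y0; rewrite !mxE => /eqP.
by apply/negP; have := gS ord0; rewrite inE.
Qed.

From Stdlib Require Import Lia.
Lemma arith (z s n m nz : nat) : (n <= m -> z < s -> s <= n -> z + nz = m -> m - n + 1 <= nz)%N.
Proof. move=> /leP h0 /ltP h1 /leP h2 h3; apply/leP; move: h3; rewrite -?plusE -?minusE; lia. Qed.
Lemma arith2 (z s m nz : nat) : (z < s -> z + nz = m -> m + 1 <= s + nz)%N.
Proof. move=> /ltP h1 h3; apply/leP; move: h3; rewrite -?plusE -?minusE; lia. Qed.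

Lemma card_sum (T : finType) (P : pred T) : #|[set x | P x]| = (\sum_x (P x : nat))%N.
Proof.
rewrite -sum1_card big_mkcond; apply: eq_bigr => x _; rewrite inE; by case: (P x).
Qed.

Definition cnt (F : fieldType) p k (M : 'M[F]_(p,k)) (j : 'I_k) : nat :=
  (\sum_(i < p) (M i j != 0%R : nat))%N.

Lemma nnz_cols (F : fieldType) p k (M : 'M[F]_(p,k)) : nnz M = (\sum_j cnt M j)%N.
Proof.
rewrite /nnz card_sum /cnt -(pair_big xpredT xpredT (fun i j => (M i j != 0%R : nat))) /=.
by rewrite exchange_big.
Qed.

Lemma zeros_nz (F : fieldType) p (v : 'cV[F]_p) :
  (#|[set i | v i ord0 == 0%R]| + #|[set i | v i ord0 != 0%R]| = p)%N.
Proof.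
have h := cardC [set i | v i ord0 == 0%R]; rewrite card_ord in h.
apply: eq_trans h; congr (_ + _)%N.
by apply: eq_card => i; rewrite !inE.
Qed.

Lemma col_nz (F : fieldType) n (X : 'M[F]_n) j : X \in unitmx -> \col_i X i j != 0.
Proof.
move=> Xu; apply/eqP => x0.
have := congr1 (fun M : 'M_n => M j j) (mulVmx Xu).
rewrite !mxE big1 ?eqxx; first by move/eqP; rewrite eq_sym oner_eq0.
move=> k _.
have := congr1 (fun M : 'cV_n => M k ord0) x0; rewrite !mxE => ->.
by rewrite mulr0.
Qed.

Lemma cnt_col (F : fieldType) p n (M : 'M[F]_(p,n)) (X : 'M[F]_n) j :
  cnt (M *m X) j = #|[set i | (M *m \col_k X k j) i ord0 != 0%R]|.
Proof.
rewrite card_sum /cnt; apply: eq_bigr => i _; rewrite !mxE.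
by congr (nat_of_bool (_ != _)); apply: eq_bigr => k _; rewrite !mxE.
Qed.

Lemma supp_col (F : fieldType) n (X : 'M[F]_n) j :
  (\sum_(i < n) (X i j != 0%R : nat))%N = #|[set i | (\col_k X k j) i ord0 != 0%R]|.
Proof. by rewrite card_sum; apply: eq_bigr => i _; rewrite !mxE. Qed.

Theorem mainTheorem4 (F : fieldType) (m n : nat) (A : 'M[F]_(m, n)) :
  (n <= m)%N ->
  all_square_submx_nonsingular A ->
  [/\ \rank A = n,
      (forall X : 'M[F]_n, X \in unitmx -> ((m - n + 1) * n <= nnz (A *m X))%N)
    & optimally_sparse (col_mx (1%:M : 'M[F]_n) A)].
Proof.
move=> nm HA; split.
- rewrite -mxrank_tr; apply/eqP; change (row_free A^T); rewrite -kermx_eq0.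
  apply/eqP/row_matrixP => i; rewrite row0.
  set u := row i (kermx A^T).
  have H : u *m A^T = 0 by apply/sub_kermxP; exact: row_sub.
  have H2 : A *m u^T = 0 by have := congr1 trmx H; rewrite trmx_mul trmxK trmx0.
  case: (eqVneq u 0) => // un0.
  have ut0 : u^T != 0 by apply: contraNneq un0 => h; rewrite -(trmxK u) h trmx0.
  have := key HA ut0; rewrite H2.
  have -> : [set i0 | (0 : 'cV[F]_m) i0 ord0 == 0%R] = setT by apply/setP => k; rewrite !inE mxE eqxx.
  rewrite cardsT card_ord => h.
  have := leq_trans h (max_card _); rewrite card_ord => h'.
  by move: (leq_trans h' nm); rewrite ltnn.
- move=> X Xu; rewrite nnz_cols.
  rewrite mulnC -{1}(card_ord n) -sum_nat_const; apply: leq_sum => j _.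
  rewrite cnt_col.
  have x0 := col_nz j Xu.
  have hs := max_card (mem [set j0 | (\col_k X k j) j0 ord0 != 0%R]); rewrite card_ord in hs.
  exact: (arith nm (key HA x0) hs (zeros_nz _)).
- move=> X Xu; rewrite !nnz_cols; apply: leq_sum => j _.
  apply: (@leq_trans (m + 1)).
    rewrite /cnt big_split_ord /= addnC; apply: leq_add.
      rewrite -[X in (_ <= X)%N](card_ord m) -sum1_card.
      by apply: leq_sum => i _; rewrite col_mxEd; case: (_ != _).
    rewrite (bigD1 j) //= big1 ?addn0; first by case: (_ != _).
    by move=> i ij; rewrite col_mxEu mxE (negbTE ij) mulr0n eqxx.
  rewrite mul_col_mx mul1mx /cnt big_split_ord /=.
  have -> : (\sum_(i < n) (col_mx X (A *m X) (lshift m i) j != 0%R : nat))%N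
            = (\sum_(i < n) (X i j != 0%R : nat))%N.
    by apply: eq_bigr => i _; rewrite col_mxEu.
  have -> : (\sum_(i < m) (col_mx X (A *m X) (rshift n i) j != 0%R : nat))%N
            = cnt (A *m X) j.
    by apply: eq_bigr => i _; rewrite col_mxEd.
  rewrite supp_col cnt_col.
  have x0 := col_nz j Xu.
  exact: (arith2 (key HA x0) (zeros_nz _)).
Qed.
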